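(* Let $\Sigma=\mathbb{S}^{n-1}\times\mathbb{R}\subset\mathbb{R}^{n+1}$ be a self-shrinker, with $x_n$ the coordinate on the $\mathbb{R}$ factor. Then $C=\sqrt2$ is the unique value $C>0$ such that the two hypersurfaces $\{x_n=\pm C\}$ split $\Sigma$ into three stable regions $\{x_n>C\}$, $\{|x_n|<C\}$, $\{x_n<-C\}$.
   Context: $\mathbb{S}^{n-1}$ is the round sphere of radius $\sqrt{2(n-1)}$ centered at the origin of $\mathbb{R}^n$. Stability operator: $Lf=\Delta f-\tfrac12\langle\vec x,\nabla f\rangle+(|A|^2+\tfrac12)f$. A region $\Omega$ is stable if there exists a function $u$ with $Lu=0$ and $u>0$ on $\Omega$. *)

(* Defs.v *)
From Stdlib Require Import Reals Lra.
Open Scope R_scope.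

(* Points of R^(n+1) are represented as functions [nat -> R]; only the
   coordinates 0..n are meaningful (coordinates 0..n-1 are those of the
   R^n containing S^{n-1}, coordinate n is x_n, the R factor).  All notions
   below only look at coordinates < n+1 (continuity forces functions to be
   independent of the remaining ones). *)
Definition pt := nat -> R.

Fixpoint rsum (k : nat) (f : nat -> R) : R :=
  match k with O => 0 | S k' => rsum k' f + f k' end.

Definition upd (x : pt) (i : nat) (t : R) : pt :=
  fun j => if Nat.eq_dec j i then t else x j.

Definition near (N : nat) (x y : pt) (d : R) : Prop :=
  forall i, (i < N)%nat -> Rabs (y i - x i) < d.

Definition open_set (N : nat) (W : pt -> Prop) : Prop :=
  forall x, W x -> exists d, 0 < d /\ forall y, near N x y d -> W y.

Definition cont_on (N : nat) (W : pt -> Prop) (f : pt -> R) : Prop :=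
  forall x, W x -> forall eps, 0 < eps ->
    exists d, 0 < d /\ forall y, near N x y d -> Rabs (f y - f x) < eps.

Definition C2_on (N : nat) (W : pt -> Prop) (U : pt -> R)
    (D1 : nat -> pt -> R) (D2 : nat -> nat -> pt -> R) : Prop :=
  cont_on N W U /\
  (forall i, (i < N)%nat -> cont_on N W (D1 i)) /\
  (forall i j, (i < N)%nat -> (j < N)%nat -> cont_on N W (D2 i j)) /\
  (forall x i, W x -> (i < N)%nat ->
      derivable_pt_lim (fun t => U (upd x i t)) (x i) (D1 i x)) /\
  (forall x i j, W x -> (i < N)%nat -> (j < N)%nat ->
      derivable_pt_lim (fun t => D1 j (upd x i t)) (x i) (D2 i j x)).

Definition rad (n : nat) : R := sqrt (2 * (INR n - 1)).

Definition Sigma (n : nat) (x : pt) : Prop :=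
  rsum n (fun i => x i ^ 2) = 2 * (INR n - 1).

Definition nu (n : nat) (x : pt) (i : nat) : R :=
  if Nat.ltb i n then x i / rad n else 0.

(* mean curvature (w.r.t. nu) and |A|^2 of Sigma:
   n-1 principal curvatures 1/rad n and one principal curvature 0 *)
Definition Hmean (n : nat) : R := (INR n - 1) / rad n.
Definition A2 (n : nat) : R := (INR n - 1) / (rad n ^ 2).

(* Laplace-Beltrami operator of Sigma applied to (the restriction of) U,
   expressed through ambient derivatives:
   Delta_Sigma u = Delta_{R^{n+1}} U - D^2U(nu,nu) - H <DU, nu>. *)
Definition lapSigma (n : nat) (D1 : nat -> pt -> R) (D2 : nat -> nat -> pt -> R)
    (x : pt) : R :=
  rsum (S n) (fun i => D2 i i x)
  - rsum (S n) (fun i => rsum (S n) (fun j => nu n x i * nu n x j * D2 i j x))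
  - Hmean n * rsum (S n) (fun i => nu n x i * D1 i x).

(* <x, grad_Sigma u> = <x, DU> - <x, nu> <DU, nu> *)
Definition xgradSigma (n : nat) (D1 : nat -> pt -> R) (x : pt) : R :=
  rsum (S n) (fun i => x i * D1 i x)
  - rsum (S n) (fun i => x i * nu n x i) * rsum (S n) (fun i => nu n x i * D1 i x).

Definition Lop (n : nat) (U : pt -> R) (D1 : nat -> pt -> R)
    (D2 : nat -> nat -> pt -> R) (x : pt) : R :=
  lapSigma n D1 D2 x - / 2 * xgradSigma n D1 x + (A2 n + / 2) * U x.

(* A C^2 function on Omega is given as a
   C^2 function on an open neighbourhood W of Omega in R^{n+1}. *)
Definition stable (n : nat) (Omega : pt -> Prop) : Prop :=
  exists (W : pt -> Prop) (U : pt -> R) D1 D2,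
    open_set (S n) W /\ (forall x, Omega x -> W x) /\
    C2_on (S n) W U D1 D2 /\
    forall x, Omega x -> Lop n U D1 D2 x = 0 /\ 0 < U x.

Definition region_up (n : nat) (C : R) (x : pt) : Prop := Sigma n x /\ C < x n.
Definition region_mid (n : nat) (C : R) (x : pt) : Prop := Sigma n x /\ Rabs (x n) < C.
Definition region_low (n : nat) (C : R) (x : pt) : Prop := Sigma n x /\ x n < - C.

(* Main.v *)
From Coquelicot Require Import Coquelicot.
From Stdlib Require Import Reals Lra Lia Psatz Classical FunctionalExtensionality ClassicalEpsilon.
Require Import Defs.
Open Scope R_scope.

Lemma rsum_ext k f g : (forall i, (i < k)%nat -> f i = g i) -> rsum k f = rsum k g.
Proof. induction k; cbn [rsum]; intros H; auto. rewrite IHk, H; auto; intros; apply H; lia. Qed.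

Lemma rsum_add k f g : rsum k (fun i => f i + g i) = rsum k f + rsum k g.
Proof. induction k; cbn [rsum]; [lra| rewrite IHk; ring]. Qed.

Lemma rsum_scal k c f : rsum k (fun i => c * f i) = c * rsum k f.
Proof. induction k; cbn [rsum]; [ring| rewrite IHk; ring]. Qed.

Lemma rsum_const k c : rsum k (fun _ => c) = INR k * c.
Proof. induction k; cbn [rsum]; [change (INR 0) with 0; ring|]. rewrite IHk, S_INR; ring. Qed.

Lemma rsum_zero k f : (forall i, (i < k)%nat -> f i = 0) -> rsum k f = 0.
Proof. intros H. rewrite (rsum_ext k f (fun _ => 0)); auto. rewrite rsum_const; ring. Qed.

Lemma rsum_swap k m (f : nat -> nat -> R) :
  rsum k (fun i => rsum m (fun j => f i j)) = rsum m (fun j => rsum k (fun i => f i j)).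
Proof.
  induction k; simpl.
  - rewrite rsum_zero; auto.
  - rewrite IHk, <- rsum_add; reflexivity.
Qed.

Lemma rsum_nonneg k f : (forall i, (i < k)%nat -> 0 <= f i) -> 0 <= rsum k f.
Proof. induction k; cbn [rsum]; intros H; [lra|]. assert (0 <= f k) by (apply H; lia).
  assert (0 <= rsum k f) by (apply IHk; intros; apply H; lia). lra. Qed.

Lemma rsum_ge_term k f i : (i < k)%nat -> (forall j, (j < k)%nat -> j <> i -> 0 <= f j) ->
  f i <= rsum k f.
Proof.
  induction k; cbn [rsum]; intros Hi H; [lia|].
  destruct (Nat.eq_dec i k) as [->|Hne].
  - assert (0 <= rsum k f) by (apply rsum_nonneg; intros; apply H; lia). lra.
  - assert (f i <= rsum k f) by (apply IHk; [lia| intros; apply H; lia]).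
    assert (0 <= f k) by (apply H; lia). lra.
Qed.

Lemma upd_same x i t : upd x i t i = t.
Proof. unfold upd; destruct (Nat.eq_dec i i); congruence. Qed.
Lemma upd_other x i t j : j <> i -> upd x i t j = x j.
Proof. unfold upd; destruct (Nat.eq_dec j i); congruence. Qed.
Lemma upd_id x i : upd x i (x i) = x.
Proof. apply functional_extensionality; intro j; unfold upd; destruct (Nat.eq_dec j i); subst; auto. Qed.
Lemma upd_upd x i a b : upd (upd x i a) i b = upd x i b.
Proof. apply functional_extensionality; intro j; unfold upd; destruct (Nat.eq_dec j i); auto. Qed.
Lemma upd_comm x i j a b : i <> j -> upd (upd x i a) j b = upd (upd x j b) i a.
Proof. intros; apply functional_extensionality; intro k; unfold upd;
  destruct (Nat.eq_dec k j); destruct (Nat.eq_dec k i); subst; congruence. Qed.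

Lemma rsum_sq_upd n x i t : (i < n)%nat ->
  rsum n (fun k => upd x i t k ^ 2) = rsum n (fun k => x k ^ 2) - x i ^ 2 + t ^ 2.
Proof.
  induction n; cbn [rsum]; intros Hi; [lia|].
  destruct (Nat.eq_dec i n) as [->|Hne].
  - rewrite upd_same. rewrite (rsum_ext n _ (fun k => x k ^ 2)). ring.
    intros j Hj; rewrite upd_other; auto; lia.
  - rewrite IHn by lia. rewrite upd_other by auto. ring.
Qed.

Lemma rsum_sq_upd_out n x i t : (n <= i)%nat ->
  rsum n (fun k => upd x i t k ^ 2) = rsum n (fun k => x k ^ 2).
Proof. intros; apply rsum_ext; intros; rewrite upd_other; auto; lia. Qed.

Lemma sq_le_rsum n x i : (i < n)%nat -> x i ^ 2 <= rsum n (fun k => x k ^ 2).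
Proof. intros; apply (rsum_ge_term n (fun k => x k ^ 2)); auto; intros; apply pow2_ge_0. Qed.
Definition contat (N : nat) (f : pt -> R) (x : pt) : Prop :=
  forall eps, 0 < eps -> exists d, 0 < d /\ forall y, near N x y d -> Rabs (f y - f x) < eps.

Lemma near_refl N x d : 0 < d -> near N x x d.
Proof. intros Hd i Hi. rewrite Rminus_diag, Rabs_R0; auto. Qed.

Lemma near_mono N x y d d' : d <= d' -> near N x y d -> near N x y d'.
Proof. intros Hd H i Hi. specialize (H i Hi). lra. Qed.

Lemma near_sym N x y d : near N x y d -> near N y x d.
Proof. intros H i Hi. rewrite Rabs_minus_sym; auto. Qed.

Lemma near_tri N x y z d1 d2 : near N x y d1 -> near N y z d2 -> near N x z (d1 + d2).
Proof. intros H1 H2 i Hi. specialize (H1 i Hi). specialize (H2 i Hi).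
  replace (z i - x i) with ((z i - y i) + (y i - x i)) by ring.
  eapply Rle_lt_trans; [apply Rabs_triang|]. lra. Qed.

Lemma contat_comp2 N f h G x : contat N f x -> contat N h x ->
  continuity_2d_pt G (f x) (h x) -> contat N (fun y => G (f y) (h y)) x.
Proof.
  intros Hf Hh HG eps Heps.
  destruct (HG (mkposreal eps Heps)) as [d Hd].
  destruct (Hf d (cond_pos d)) as [d1 [Hd1 H1]].
  destruct (Hh d (cond_pos d)) as [d2 [Hd2 H2]].
  exists (Rmin d1 d2); split; [apply Rmin_pos; auto|].
  intros y Hy. apply (Hd (f y) (h y)).
  - apply H1; eapply near_mono; [|exact Hy]; apply Rmin_l.
  - apply H2; eapply near_mono; [|exact Hy]; apply Rmin_r.
Qed.

Lemma contat_comp1 N f G x : contat N f x -> continuity_pt G (f x) ->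
  contat N (fun y => G (f y)) x.
Proof.
  intros Hf HG.
  apply (contat_comp2 N f f (fun u _ => G u) x Hf Hf).
  apply (continuity_1d_2d_pt_comp G (fun u _ => u)); auto.
  apply continuity_2d_pt_id1.
Qed.

Lemma contat_coord N i x : (i < N)%nat -> contat N (fun y => y i) x.
Proof. intros Hi eps Heps; exists eps; split; auto. Qed.

Lemma contat_const N c x : contat N (fun _ => c) x.
Proof. intros eps Heps; exists 1; split; [lra|]. intros; rewrite Rminus_diag, Rabs_R0; auto. Qed.

Lemma contat_plus N f h x : contat N f x -> contat N h x -> contat N (fun y => f y + h y) x.
Proof. intros; apply (contat_comp2 N f h Rplus); auto.
  apply continuity_2d_pt_plus; [apply continuity_2d_pt_id1|apply continuity_2d_pt_id2]. Qed.
Lemma contat_minus N f h x : contat N f x -> contat N h x -> contat N (fun y => f y - h y) x.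
Proof. intros; apply (contat_comp2 N f h Rminus); auto.
  apply continuity_2d_pt_minus; [apply continuity_2d_pt_id1|apply continuity_2d_pt_id2]. Qed.
Lemma contat_mult N f h x : contat N f x -> contat N h x -> contat N (fun y => f y * h y) x.
Proof. intros; apply (contat_comp2 N f h Rmult); auto.
  apply continuity_2d_pt_mult; [apply continuity_2d_pt_id1|apply continuity_2d_pt_id2]. Qed.
Lemma contat_div N f h x : contat N f x -> contat N h x -> h x <> 0 -> contat N (fun y => f y / h y) x.
Proof. intros; apply (contat_comp2 N f h Rdiv); auto.
  apply continuity_2d_pt_mult; [apply continuity_2d_pt_id1|].
  apply (continuity_2d_pt_inv (fun _ v => v)); auto. apply continuity_2d_pt_id2. Qed.

Lemma contat_rsum_sq N n x : (n <= N)%nat -> contat N (fun y => rsum n (fun k => y k ^ 2)) x.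
Proof.
  induction n; intros Hn; cbn [rsum].
  - apply contat_const.
  - apply contat_plus; [apply IHn; lia|].
    apply (contat_comp1 N (fun y => y n) (fun u => u ^ 2)); [apply contat_coord; lia|].
    apply derivable_continuous_pt, derivable_pt_pow.
Qed.

Lemma contat_ext N f g x : (forall y, f y = g y) -> contat N f x -> contat N g x.
Proof. intros E H eps He; destruct (H eps He) as [d [Hd H']]; exists d; split; auto.
  intros y Hy; rewrite <- !E; auto. Qed.

Lemma near_upd N x i t d : Rabs (t - x i) < d -> 0 < d -> near N x (upd x i t) d.
Proof. intros Ht Hd j Hj. unfold upd; destruct (Nat.eq_dec j i); subst; auto.
  rewrite Rminus_diag, Rabs_R0; auto. Qed.
Fixpoint to_pt (N : nat) : Compactness.Tn N R -> pt :=
  match N return Compactness.Tn N R -> pt with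
  | O => fun _ _ => 0
  | S N' => fun t i => match i with O => fst t | S i' => to_pt N' (snd t) i' end
  end.

Fixpoint of_pt (N : nat) : pt -> Compactness.Tn N R :=
  match N return pt -> Compactness.Tn N R with
  | O => fun _ => tt
  | S N' => fun x => (x 0%nat, of_pt N' (fun i => x (S i)))
  end.

Lemma bounded_of_pt N (A B x : pt) : (forall i, (i < N)%nat -> A i <= x i <= B i) ->
  Compactness.bounded_n N (of_pt N A) (of_pt N B) (of_pt N x).
Proof.
  revert A B x; induction N; intros A B x H; simpl; auto.
  split; [apply H; lia|]. apply IHN. intros i Hi; apply H; lia.
Qed.

Lemma close_of_pt N d (x : pt) t : Compactness.close_n N d (of_pt N x) t -> near N (to_pt N t) x d.
Proof.
  revert x t; induction N; intros x t H i Hi; [lia|].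
  destruct t as [t1 t2]; simpl in H; destruct H as [H1 H2].
  destruct i; simpl; [auto|]. apply (IHN (fun i => x (S i)) t2 H2 i); lia.
Qed.

Lemma list_max {A : Type} (l : list A) (f : A -> R) a : List.In a l ->
  exists m, List.In m l /\ forall b, List.In b l -> f b <= f m.
Proof.
  revert a; induction l as [|c l IH]; intros a Ha; [destruct Ha|].
  destruct l as [|c' l'].
  - exists c; split; [left; auto|]. intros b [->|[]]; lra.
  - destruct (IH c' (or_introl eq_refl)) as [m [Hm Hmax]].
    destruct (Rle_dec (f c) (f m)).
    + exists m; split; [right; auto|]. intros b [->|Hb]; auto.
    + exists c; split; [left; auto|]. intros b [->|Hb]; [lra|]. specialize (Hmax b Hb); lra.
Qed.

Lemma max_exists N (K : pt -> Prop) (phi : pt -> R) (B : R) :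
  (forall x, ~ K x -> exists d, 0 < d /\ forall y, near N x y d -> ~ K y) ->
  (forall x, K x -> forall i, (i < N)%nat -> Rabs (x i) <= B) ->
  (forall x, K x -> contat N phi x) ->
  (exists x0, K x0) ->
  exists p, K p /\ forall q, K q -> phi q <= phi p.
Proof.
  intros Hcl Hb Hc [x0 Hx0].
  apply NNPP; intro Hno.
  assert (Hup : forall p, K p -> exists q, K q /\ phi p < phi q).
  { intros p Kp. apply NNPP; intro Hn. apply Hno. exists p; split; auto.
    intros q Kq. apply Rnot_lt_le. intro Hlt. apply Hn. exists q; auto. }
  assert (Hloc : forall x : pt, exists dq : R * pt, 0 < fst dq /\ K (snd dq) /\
     forall y, near N x y (fst dq) -> K y -> phi y < phi (snd dq)).
  { intro x. destruct (classic (K x)) as [Kx|nKx].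
    - destruct (Hup x Kx) as [q [Kq Hq]].
      destruct (Hc x Kx (phi q - phi x)) as [d [Hd Hd']]; [lra|].
      exists (d, q); simpl; repeat split; auto.
      intros y Hy Ky. specialize (Hd' y Hy). apply Rabs_lt_between in Hd'. lra.
    - destruct (Hcl x nKx) as [d [Hd Hd']].
      exists (d, x0); simpl; repeat split; auto.
      intros y Hy Ky. exfalso; apply (Hd' y Hy Ky). }
  set (F := fun x => proj1_sig (constructive_indefinite_description _ (Hloc x))).
  assert (HF : forall x, 0 < fst (F x) /\ K (snd (F x)) /\
     forall y, near N x y (fst (F x)) -> K y -> phi y < phi (snd (F x))).
  { intro x; unfold F; destruct (constructive_indefinite_description _ (Hloc x)); auto. }
  set (delta := fun t : Compactness.Tn N R => mkposreal (fst (F (to_pt N t))) (proj1 (HF (to_pt N t)))).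
  assert (Hbox : forall y, K y -> Compactness.bounded_n N (of_pt N (fun _ => -B)) (of_pt N (fun _ => B)) (of_pt N y)).
  { intros y Ky; apply bounded_of_pt; intros i Hi. specialize (Hb y Ky i Hi).
    apply Rabs_le_between in Hb; lra. }
  apply (compactness_list N (of_pt N (fun _ => -B)) (of_pt N (fun _ => B)) delta).
  intros [l Hl].
  destruct (Hl _ (Hbox x0 Hx0)) as [t0 [Ht0 _]].
  destruct (list_max l (fun t => phi (snd (F (to_pt N t)))) t0 Ht0) as [m [Hm Hmax]].
  destruct (HF (to_pt N m)) as [_ [Kq _]].
  set (q := snd (F (to_pt N m))) in *.
  destruct (Hl _ (Hbox q Kq)) as [t [Ht [_ Hclose]]].
  apply close_of_pt in Hclose.
  destruct (HF (to_pt N t)) as [_ [_ H3]].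
  specialize (H3 q Hclose Kq). specialize (Hmax t Ht). simpl in Hmax. unfold q in *. lra.
Qed.
Lemma second_deriv_test (g g' : R -> R) t0 c eta : 0 < eta ->
  (forall t, Rabs (t - t0) < eta -> derivable_pt_lim g t (g' t)) ->
  derivable_pt_lim g' t0 c ->
  (forall t, Rabs (t - t0) < eta -> g t0 <= g t) ->
  g' t0 = 0 /\ 0 <= c.
Proof.
  intros Heta Hg Hg' Hmin.
  assert (H0 : g' t0 = 0).
  { assert (Hd : derivable_pt_lim g t0 (g' t0)) by (apply Hg; rewrite Rminus_diag, Rabs_R0; auto).
    pose (pr := exist (fun l => derivable_pt_lim g t0 l) (g' t0) Hd : derivable_pt g t0).
    change (g' t0) with (derive_pt g t0 pr).
    apply (deriv_minimum g (t0 - eta) (t0 + eta) t0 pr); try lra.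
    intros x H1 H2. apply Hmin. apply Rabs_def1; lra. }
  split; auto.
  apply Rnot_lt_le; intro Hc.
  destruct (Hg' (- c / 2)) as [[delta Hdelta] Hdel]; [lra|].
  simpl in Hdel.
  set (h1 := Rmin delta eta / 2).
  assert (Hh1 : 0 < h1) by (unfold h1; pose proof (Rmin_pos delta eta Hdelta Heta); lra).
  assert (Hh1d : h1 < delta) by (unfold h1; pose proof (Rmin_l delta eta); lra).
  assert (Hh1e : h1 < eta) by (unfold h1; pose proof (Rmin_r delta eta); lra).
  destruct (MVT_cor2 g g' t0 (t0 + h1)) as [xi [Hxi Hxib]]; [lra| |].
  { intros x Hx. apply Hg. apply Rabs_def1; lra. }
  assert (Hneg : g' xi < 0).
  { specialize (Hdel (xi - t0)). replace (t0 + (xi - t0)) with xi in Hdel by ring.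
    rewrite H0 in Hdel. assert (xi - t0 <> 0) by lra.
    assert (Rabs (xi - t0) < delta) by (apply Rabs_def1; lra).
    specialize (Hdel H H1). apply Rabs_def2 in Hdel. destruct Hdel as [Ha Hb].

    assert (g' xi / (xi - t0) < 0) by lra.
    assert (0 < xi - t0) by lra.
    destruct (Rlt_or_le (g' xi) 0); auto.
    assert (0 <= g' xi / (xi - t0)) by (apply Rdiv_le_0_compat; lra). lra. }
  assert (g t0 <= g (t0 + h1)) by (apply Hmin; apply Rabs_def1; lra).
  assert (0 < h1) by auto. nra.
Qed.
Lemma locally_of_box (P : R * R -> Prop) x y (d : posreal) :
  (forall u v, Rabs (u - x) < d -> Rabs (v - y) < d -> P (u, v)) -> locally (x, y) P.
Proof.
  intros H. exists d. intros [u v] [H1 H2]. apply H; [exact H1| exact H2].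
Qed.

Lemma near_upd2 N p i j u v u0 v0 d : i <> j ->
  Rabs (u - u0) < d -> Rabs (v - v0) < d -> 0 < d ->
  near N (upd (upd p i u0) j v0) (upd (upd p i u) j v) d.
Proof.
  intros Hij Hu Hv Hd k Hk. unfold upd.
  destruct (Nat.eq_dec k j); auto. destruct (Nat.eq_dec k i); auto.
  rewrite Rminus_diag, Rabs_R0; auto.
Qed.

Lemma chain2 (N : nat) (W : pt -> Prop) (Phi Pi Pj : pt -> R) (p : pt) i j
   (a b : R -> R) a' b' t :
  i <> j -> open_set N W ->
  W (upd (upd p i (a t)) j (b t)) ->
  (forall x, W x -> derivable_pt_lim (fun s => Phi (upd x i s)) (x i) (Pi x)) ->
  (forall x, W x -> contat N Pi x) ->
  (forall x, W x -> derivable_pt_lim (fun s => Phi (upd x j s)) (x j) (Pj x)) ->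
  derivable_pt_lim a t a' -> derivable_pt_lim b t b' ->
  derivable_pt_lim (fun s => Phi (upd (upd p i (a s)) j (b s))) t
    (Pi (upd (upd p i (a t)) j (b t)) * a' + Pj (upd (upd p i (a t)) j (b t)) * b').
Proof.
  intros Hij HW Wq HPi HPic HPj Ha Hb.
  set (q := upd (upd p i (a t)) j (b t)) in *.
  set (F := fun u v => Phi (upd (upd p i u) j v)).
  apply (derivable_pt_lim_comp_2d F a b t (Pi q) (Pj q) a' b'); auto.
  apply filterdiff_differentiable_pt_lim.
  eapply filterdiff_ext_lin.
  - apply (is_derive_filterdiff F (a t) (b t) (fun u v => Pi (upd (upd p i u) j v)) (Pj q)).
    + destruct (HW q Wq) as [d [Hd HdW]].
      apply (locally_of_box _ _ _ (mkposreal d Hd)). simpl. intros u v Hu Hv.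
      apply is_derive_Reals.
      assert (WQ : W (upd (upd p i u) j v)) by (apply HdW; apply near_upd2; auto).
      specialize (HPi _ WQ).
      replace ((upd (upd p i u) j v) i) with u in HPi by (rewrite upd_other; auto; rewrite upd_same; auto).
      unfold F. eapply derivable_pt_lim_ext; [|exact HPi].
      intro z. simpl. rewrite (upd_comm p i j z v), (upd_comm p i j u v), upd_upd; auto.
    + apply is_derive_Reals. specialize (HPj q Wq).
      unfold q in HPj at 2. rewrite upd_same in HPj.
      eapply derivable_pt_lim_ext; [|exact HPj].
      intro z. unfold F, q. rewrite upd_upd. reflexivity.
    + apply (proj1 (continuity_2d_pt_filterlim (fun u v => Pi (upd (upd p i u) j v)) (a t) (b t))).
      intros eps. destruct (HPic q Wq eps (cond_pos eps)) as [d [Hd Hd']].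
      exists (mkposreal d Hd). simpl. intros u v Hu Hv. apply Hd'. apply near_upd2; auto.
  - intros [u v]. simpl. reflexivity.
Qed.
Lemma rsum_le k f g : (forall i, (i < k)%nat -> f i <= g i) -> rsum k f <= rsum k g.
Proof. induction k; cbn [rsum]; intros H; [lra|].
  assert (f k <= g k) by (apply H; lia). assert (rsum k f <= rsum k g) by (apply IHk; intros; apply H; lia). lra. Qed.

Definition Eij (p : pt) (D1 : nat -> pt -> R) (D2 : nat -> nat -> pt -> R) i j : R :=
  p j ^ 2 * D2 i i p - p i * p j * (D2 i j p + D2 j i p) + p i ^ 2 * D2 j j p
  - p i * D1 i p - p j * D1 j p.

Lemma rad_sq n : (2 <= n)%nat -> rad n * rad n = 2 * (INR n - 1).
Proof. intros Hn. unfold rad. apply sqrt_sqrt.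
  assert (2 <= INR n) by (replace 2 with (INR 2) by (simpl; ring); apply le_INR; auto). lra. Qed.

Lemma rad_pos n : (2 <= n)%nat -> 0 < rad n.
Proof. intros Hn. unfold rad. apply sqrt_lt_R0.
  assert (2 <= INR n) by (replace 2 with (INR 2) by (simpl; ring); apply le_INR; auto). lra. Qed.

Lemma nu_n n x : nu n x n = 0.
Proof. unfold nu. rewrite Nat.ltb_irrefl. reflexivity. Qed.
Lemma nu_lt n x i : (i < n)%nat -> nu n x i = x i / rad n.
Proof. intros H. unfold nu. apply Nat.ltb_lt in H. rewrite H. reflexivity. Qed.

Lemma sumE_identity n p D1 D2 :
  let r2 := rsum n (fun k => p k ^ 2) in
  let T := rsum n (fun i => D2 i i p) in
  let P := rsum n (fun i => p i * D1 i p) in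
  let Q := rsum n (fun i => rsum n (fun j => p i * p j * D2 i j p)) in
  rsum n (fun i => rsum n (fun j => Eij p D1 D2 i j)) = 2 * r2 * T - 2 * Q - 2 * INR n * P.
Proof.
  intros r2 T P Q.
  assert (Hin : forall i, rsum n (fun j => Eij p D1 D2 i j) =
     D2 i i p * r2 - p i * rsum n (fun j => p j * D2 i j p) - p i * rsum n (fun j => p j * D2 j i p)
     + p i ^ 2 * T - INR n * (p i * D1 i p) - P).
  { intro i. transitivity (rsum n (fun j => D2 i i p * p j ^ 2 + (- p i) * (p j * D2 i j p)
        + (- p i) * (p j * D2 j i p) + p i ^ 2 * D2 j j p + (- (p i * D1 i p))
        + (-1) * (p j * D1 j p))).
    { apply rsum_ext; intros; unfold Eij; ring. }
    rewrite !rsum_add, !rsum_scal, rsum_const. unfold r2, T, P. ring. }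
  rewrite (rsum_ext n _ _ (fun i _ => Hin i)).
  assert (HQ2 : rsum n (fun i => p i * rsum n (fun j => p j * D2 j i p)) = Q).
  { unfold Q. rewrite rsum_swap. apply rsum_ext; intros i _. rewrite <- rsum_scal.
    apply rsum_ext; intros; ring. }
  assert (HQ1 : rsum n (fun i => p i * rsum n (fun j => p j * D2 i j p)) = Q).
  { unfold Q. apply rsum_ext; intros i _. rewrite <- rsum_scal. apply rsum_ext; intros; ring. }
  assert (HT : rsum n (fun i => D2 i i p * r2) = r2 * T).
  { unfold T. rewrite <- rsum_scal. apply rsum_ext; intros; ring. }
  assert (HT2 : rsum n (fun i => p i ^ 2 * T) = r2 * T).
  { unfold r2. rewrite Rmult_comm, <- rsum_scal. apply rsum_ext; intros; ring. }
  assert (HP : rsum n (fun i => INR n * (p i * D1 i p)) = INR n * P).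
  { unfold P. rewrite rsum_scal. reflexivity. }
  unfold Rminus. rewrite !rsum_add.
  assert (Hneg : forall f, rsum n (fun i => - f i) = - rsum n f).
  { intros f. rewrite (rsum_ext n _ (fun i => (-1) * f i)) by (intros; ring). rewrite rsum_scal; ring. }
  rewrite !Hneg, HQ1, HQ2, HT, HT2, HP, rsum_const. ring.
Qed.
Lemma lop_from_E n V D1 D2 p : (2 <= n)%nat -> Sigma n p -> V p = 0 ->
  D1 n p = 0 -> 0 <= D2 n n p ->
  (forall i j, (i < n)%nat -> (j < n)%nat -> i <> j -> 0 <= Eij p D1 D2 i j) ->
  0 <= Lop n V D1 D2 p.
Proof.
  intros Hn HS HV HD1 HD2 HE.
  set (r2 := rsum n (fun k => p k ^ 2)).
  set (T := rsum n (fun i => D2 i i p)).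
  set (P := rsum n (fun i => p i * D1 i p)).
  set (Q := rsum n (fun i => rsum n (fun j => p i * p j * D2 i j p))).
  pose proof (rad_sq n Hn) as Hr. pose proof (rad_pos n Hn) as Hrp.
  unfold Sigma in HS. fold r2 in HS.
  assert (Hineq : - 2 * P <= 2 * r2 * T - 2 * Q - 2 * INR n * P).
  { assert (HI := sumE_identity n p D1 D2). cbv zeta in HI. fold r2 T P Q in HI. rewrite <- HI.
    assert (Hd : rsum n (fun i => Eij p D1 D2 i i) = - 2 * P).
    { unfold P. rewrite <- rsum_scal. apply rsum_ext; intros; unfold Eij; ring. }
    rewrite <- Hd. apply rsum_le. intros i Hi.
    apply (rsum_ge_term n (fun j => Eij p D1 D2 i j)); [exact Hi|].
    intros j Hj Hji. apply HE; auto. }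
  unfold Lop, lapSigma, xgradSigma.
  cbn [rsum].
  rewrite !nu_n.
  assert (E1 : rsum n (fun i => rsum n (fun j => nu n p i * nu n p j * D2 i j p) + nu n p i * 0 * D2 i n p)
      = Q / r2).
  { unfold Q. unfold Rdiv. rewrite Rmult_comm, <- rsum_scal. apply rsum_ext; intros i Hi.
    rewrite <- rsum_scal. rewrite Rmult_0_r, Rmult_0_l, Rplus_0_r. apply rsum_ext; intros j Hj.
    rewrite !nu_lt by auto. rewrite HS, <- Hr. field. lra. }
  assert (E2 : rsum n (fun j => 0 * nu n p j * D2 n j p) = 0).
  { apply rsum_zero; intros; ring. }
  assert (E3 : rsum n (fun i => nu n p i * D1 i p) = P / rad n).
  { unfold P, Rdiv. rewrite Rmult_comm, <- rsum_scal. apply rsum_ext; intros i Hi.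
    rewrite nu_lt by auto. field. lra. }
  assert (E4 : rsum n (fun i => p i * nu n p i) = rad n).
  { transitivity (/ rad n * r2). unfold r2. rewrite <- rsum_scal. apply rsum_ext; intros i Hi.
    rewrite nu_lt by auto. field; lra. rewrite HS, <- Hr. field; lra. }
  rewrite E1, E2, E3, E4, HV, HD1. fold T P. unfold Hmean.
  assert (2 <= INR n) by (replace 2 with (INR 2) by (simpl; ring); apply le_INR; auto).
  assert (Hr' : rad n * rad n = r2) by lra.
  assert (0 < r2) by lra.
  assert (Hfin : 0 <= (r2 * T - Q - (INR n - 1) * P) / r2).
  { apply Rdiv_le_0_compat; lra. }
  assert (Heq : T + D2 n n p - (Q / r2 + (0 + 0 * 0 * D2 n n p)) - (INR n - 1) / rad n * (P / rad n + 0 * 0) -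
    / 2 * (P + p n * 0 - (rad n + p n * 0) * (P / rad n + 0 * 0)) + (A2 n + / 2) * 0
    = D2 n n p + (r2 * T - Q - (INR n - 1) * P) / r2).
  { rewrite <- Hr'. field. lra. }
  rewrite Heq. lra.
Qed.
Definition trig (A B : R) : R -> R := fun s => A * cos s + B * sin s.

Lemma der_trig A B s : derivable_pt_lim (trig A B) s (trig B (- A) s).
Proof. apply is_derive_Reals. unfold trig. auto_derive; auto. ring. Qed.

Lemma trig0 A B : trig A B 0 = A.
Proof. unfold trig; rewrite cos_0, sin_0; ring. Qed.

Lemma deriv_cont_eps f x l : derivable_pt_lim f x l -> forall eps, 0 < eps ->
  exists eta, 0 < eta /\ forall y, Rabs (y - x) < eta -> Rabs (f y - f x) < eps.
Proof.
  intros H eps Heps.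
  assert (Hc : continuity_pt f x) by (apply (derivable_continuous_pt f x (exist _ l H))).
  unfold continuity_pt, continue_in, limit1_in, limit_in in Hc.
  destruct (Hc eps Heps) as [eta [Heta H']]. exists eta; split; auto.
  intros y Hy. destruct (Req_dec y x) as [->|Hne].
  - rewrite Rminus_diag, Rabs_R0; lra.
  - apply H'. split; [split; [exact I| auto]|]. exact Hy.
Qed.

Lemma min_lemma n W V D1 D2 p d :
  (2 <= n)%nat -> open_set (S n) W -> C2_on (S n) W V D1 D2 -> W p -> Sigma n p -> V p = 0 -> 0 < d ->
  (forall q, Sigma n q -> near (S n) p q d -> W q /\ 0 <= V q) ->
  0 <= Lop n V D1 D2 p.
Proof.
  intros Hn HW HC Wp Sp Vp Hd Hmin.
  destruct HC as [Hc0 [Hc1 [Hc2 [Hd1 Hd2]]]].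
  assert (Hz : D1 n (upd p n (p n)) = 0 /\ 0 <= D2 n n p).
  { apply (second_deriv_test (fun t => V (upd p n t)) (fun t => D1 n (upd p n t)) (p n) (D2 n n p) d Hd).
    - intros t Ht.
      assert (Hq : W (upd p n t) /\ 0 <= V (upd p n t)).
      { apply Hmin. unfold Sigma; rewrite rsum_sq_upd_out; auto. apply near_upd; auto. }
      pose proof (Hd1 (upd p n t) n (proj1 Hq) (Nat.lt_succ_diag_r n)) as H.
      rewrite upd_same in H. eapply derivable_pt_lim_ext; [|exact H].
      intro s; simpl. rewrite upd_upd; reflexivity.
    - apply Hd2; auto.
    - intros t Ht. rewrite upd_id, Vp.
      apply Hmin. unfold Sigma; rewrite rsum_sq_upd_out; auto. apply near_upd; auto. }
  rewrite upd_id in Hz. destruct Hz as [Hz1 Hz2].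
  apply lop_from_E; auto.
  intros i j Hi Hj Hij.
  set (a := trig (p i) (- p j)). set (a' := trig (- p j) (- p i)). set (a'' := trig (- p i) (p j)).
  set (b := trig (p j) (p i)). set (b' := trig (p i) (- p j)). set (b'' := trig (- p j) (- p i)).
  assert (Da : forall s, derivable_pt_lim a s (a' s)).
  { intro s; unfold a, a'. replace (trig (- p j) (- p i)) with (trig (- p j) (- p i)) by auto.
    pose proof (der_trig (p i) (- p j) s) as H. eapply derivable_pt_lim_ext; [|]; [intro; reflexivity|].
    replace (trig (- p j) (- p i) s) with (trig (- p j) (- p i) s) by auto. exact H. }
  assert (Da' : forall s, derivable_pt_lim a' s (a'' s)).
  { intro s; unfold a', a''. pose proof (der_trig (- p j) (- p i) s) as H.
    replace (trig (- p i) (p j) s) with (trig (- p i) (- - p j) s) by (rewrite Ropp_involutive; auto). exact H. }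
  assert (Db : forall s, derivable_pt_lim b s (b' s)).
  { intro s; unfold b, b'. exact (der_trig (p j) (p i) s). }
  assert (Db' : forall s, derivable_pt_lim b' s (b'' s)).
  { intro s; unfold b', b''. exact (der_trig (p i) (- p j) s). }
  assert (Hg0 : upd (upd p i (a 0)) j (b 0) = p).
  { unfold a, b; rewrite !trig0, !upd_id; reflexivity. }
  destruct (deriv_cont_eps a 0 (a' 0) (Da 0) d Hd) as [e1 [He1 H1]].
  destruct (deriv_cont_eps b 0 (b' 0) (Db 0) d Hd) as [e2 [He2 H2]].
  set (eta := Rmin e1 e2).
  assert (Heta : 0 < eta) by (apply Rmin_pos; auto).
  assert (Hgam : forall s, Rabs (s - 0) < eta ->
     W (upd (upd p i (a s)) j (b s)) /\ 0 <= V (upd (upd p i (a s)) j (b s))).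
  { intros s Hs. apply Hmin.
    - unfold Sigma. rewrite rsum_sq_upd by auto. rewrite rsum_sq_upd by auto.
      rewrite upd_other by auto. unfold Sigma in Sp. rewrite Sp.
      unfold a, b, trig.
      match goal with |- ?L = ?R => replace L with (R + (p i ^ 2 + p j ^ 2) * (sin s ^ 2 + cos s ^ 2 - 1)) by ring end.
      assert (Hsc : sin s ^ 2 + cos s ^ 2 = 1) by (rewrite <- !Rsqr_pow2; apply sin2_cos2).
      rewrite Hsc; ring.
    - rewrite <- Hg0 at 1. apply near_upd2; auto.
      + apply H1. eapply Rlt_le_trans; [exact Hs| apply Rmin_l].
      + apply H2. eapply Rlt_le_trans; [exact Hs| apply Rmin_r]. }
  assert (HiS : (i < S n)%nat) by lia. assert (HjS : (j < S n)%nat) by lia.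
  assert (Hsd := second_deriv_test (fun s => V (upd (upd p i (a s)) j (b s)))
     (fun s => D1 i (upd (upd p i (a s)) j (b s)) * a' s + D1 j (upd (upd p i (a s)) j (b s)) * b' s)
     0
     ((D2 i i (upd (upd p i (a 0)) j (b 0)) * a' 0 + D2 j i (upd (upd p i (a 0)) j (b 0)) * b' 0) * a' 0
       + D1 i (upd (upd p i (a 0)) j (b 0)) * a'' 0
      + ((D2 i j (upd (upd p i (a 0)) j (b 0)) * a' 0 + D2 j j (upd (upd p i (a 0)) j (b 0)) * b' 0) * b' 0
       + D1 j (upd (upd p i (a 0)) j (b 0)) * b'' 0))
     eta Heta).
  destruct Hsd as [_ Hc].
  - intros s Hs. exact (chain2 (S n) W V (D1 i) (D1 j) p i j a b (a' s) (b' s) s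
      Hij HW (proj1 (Hgam s Hs)) (fun x Wx => Hd1 x i Wx HiS) (fun x Wx => Hc1 i HiS x Wx)
      (fun x Wx => Hd1 x j Wx HjS) (Da s) (Db s)).
  - assert (Wg0 : W (upd (upd p i (a 0)) j (b 0))) by (rewrite Hg0; auto).
    apply derivable_pt_lim_plus; apply derivable_pt_lim_mult; try apply Da'; try apply Db'.
    + exact (chain2 (S n) W (D1 i) (D2 i i) (D2 j i) p i j a b (a' 0) (b' 0) 0
      Hij HW Wg0 (fun x Wx => Hd2 x i i Wx HiS HiS) (fun x Wx => Hc2 i i HiS HiS x Wx)
      (fun x Wx => Hd2 x j i Wx HjS HiS) (Da 0) (Db 0)).
    + exact (chain2 (S n) W (D1 j) (D2 i j) (D2 j j) p i j a b (a' 0) (b' 0) 0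
      Hij HW Wg0 (fun x Wx => Hd2 x i j Wx HiS HjS) (fun x Wx => Hc2 i j HiS HjS x Wx)
      (fun x Wx => Hd2 x j j Wx HjS HjS) (Da 0) (Db 0)).
  - intros s Hs. simpl. rewrite Hg0, Vp. apply (proj2 (Hgam s Hs)).
  - rewrite Hg0 in Hc. unfold a', a'', b', b'' in Hc. rewrite !trig0 in Hc.
    unfold Eij. nra.
Qed.
Definition Uz (n : nat) (g : R -> R) : pt -> R := fun x => g (x n).
Definition D1z (n : nat) (g1 : R -> R) : nat -> pt -> R :=
  fun i x => if Nat.eq_dec i n then g1 (x n) else 0.
Definition D2z (n : nat) (g2 : R -> R) : nat -> nat -> pt -> R :=
  fun i j x => if Nat.eq_dec i n then (if Nat.eq_dec j n then g2 (x n) else 0) else 0.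

Lemma contat_zfun N n h x : (n < N)%nat -> continuity_pt h (x n) -> contat N (fun y => h (y n)) x.
Proof. intros; apply (contat_comp1 N (fun y => y n) h x); auto. apply contat_coord; auto. Qed.

Lemma der_const_upd (F : pt -> R) x i c : (forall t, F (upd x i t) = c) ->
  derivable_pt_lim (fun t => F (upd x i t)) (x i) 0.
Proof. intros H. eapply derivable_pt_lim_ext; [|apply (derivable_pt_lim_const c)].
  intro t; rewrite H; reflexivity. Qed.

Lemma zfun_C2 n W g g1 g2 : (forall z, derivable_pt_lim g z (g1 z)) ->
  (forall z, derivable_pt_lim g1 z (g2 z)) -> (forall z, continuity_pt g2 z) ->
  C2_on (S n) W (Uz n g) (D1z n g1) (D2z n g2).
Proof.
  intros H1 H2 H3.
  assert (Hc : forall h, (forall z, continuity_pt h z) -> cont_on (S n) W (fun y => h (y n))).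
  { intros h Hh x _. apply (contat_zfun (S n) n h x); [lia| apply Hh]. }
  assert (Hg1c : forall z, continuity_pt g1 z) by (intro z; exact (derivable_continuous_pt g1 z (exist _ (g2 z) (H2 z)))).
  assert (Hgc : forall z, continuity_pt g z) by (intro z; exact (derivable_continuous_pt g z (exist _ (g1 z) (H1 z)))).
  repeat split.
  - apply Hc; auto.
  - intros i Hi. unfold D1z. destruct (Nat.eq_dec i n); [apply Hc; auto|].
    intros x _; apply contat_const.
  - intros i j Hi Hj. unfold D2z. destruct (Nat.eq_dec i n); [destruct (Nat.eq_dec j n)|];
      [apply Hc; auto| |]; intros x _; apply contat_const.
  - intros x i Wx Hi. unfold Uz, D1z. destruct (Nat.eq_dec i n) as [->|Hne].
    + eapply derivable_pt_lim_ext; [|apply H1]. intro t; simpl; rewrite upd_same; auto.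
    + apply (der_const_upd (fun y => g (y n)) x i (g (x n))). intro t; rewrite upd_other; auto.
  - intros x i j Wx Hi Hj. unfold D2z, D1z. destruct (Nat.eq_dec j n) as [->|Hne].
    + destruct (Nat.eq_dec i n) as [->|Hne].
      * eapply derivable_pt_lim_ext; [|apply H2]. intro t; simpl; rewrite upd_same; auto.
      * apply (der_const_upd (fun y => g1 (y n)) x i (g1 (x n))). intro t; rewrite upd_other; auto.
    + destruct (Nat.eq_dec i n); apply (der_const_upd (fun _ => 0) x i 0); auto.
Qed.

Lemma A2_half n : (2 <= n)%nat -> A2 n = / 2.
Proof. intros Hn. unfold A2. replace (rad n ^ 2) with (rad n * rad n) by ring.
  rewrite rad_sq by auto.
  assert (2 <= INR n) by (replace 2 with (INR 2) by (simpl; ring); apply le_INR; auto).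
  field. lra. Qed.

Lemma zfun_Lop n g g1 g2 x : (2 <= n)%nat ->
  Lop n (Uz n g) (D1z n g1) (D2z n g2) x = g2 (x n) - x n / 2 * g1 (x n) + g (x n).
Proof.
  intros Hn.
  assert (S1 : rsum (S n) (fun i => D2z n g2 i i x) = g2 (x n)).
  { cbn [rsum]. rewrite rsum_zero.
    - unfold D2z. destruct (Nat.eq_dec n n); [ring| congruence].
    - intros i Hi. unfold D2z. destruct (Nat.eq_dec i n); [lia| auto]. }
  assert (S2 : rsum (S n) (fun i => rsum (S n) (fun j => nu n x i * nu n x j * D2z n g2 i j x)) = 0).
  { apply rsum_zero; intros i Hi; apply rsum_zero; intros j Hj. unfold D2z.
    destruct (Nat.eq_dec i n); destruct (Nat.eq_dec j n); subst; try rewrite nu_n; ring. }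
  assert (S3 : rsum (S n) (fun i => nu n x i * D1z n g1 i x) = 0).
  { apply rsum_zero; intros i Hi. unfold D1z. destruct (Nat.eq_dec i n); subst; try rewrite nu_n; ring. }
  assert (S4 : rsum (S n) (fun i => x i * D1z n g1 i x) = x n * g1 (x n)).
  { cbn [rsum]. rewrite rsum_zero.
    - unfold D1z. destruct (Nat.eq_dec n n); [ring| congruence].
    - intros i Hi. unfold D1z. destruct (Nat.eq_dec i n); [lia| ring]. }
  unfold Lop, lapSigma, xgradSigma. rewrite S1, S2, S3, S4, A2_half by auto. unfold Uz. field.
Qed.

Lemma rsum_lin k f g s : rsum k (fun i => f i - s * g i) = rsum k f - s * rsum k g.
Proof. unfold Rminus. rewrite rsum_add.
  rewrite (rsum_ext k (fun i => - (s * g i)) (fun i => (- s) * g i)) by (intros; ring).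
  rewrite rsum_scal; ring. Qed.

Lemma Lop_lin n U D1 D2 G E1 E2 s p :
  Lop n (fun x => U x - s * G x) (fun i x => D1 i x - s * E1 i x)
    (fun i j x => D2 i j x - s * E2 i j x) p = Lop n U D1 D2 p - s * Lop n G E1 E2 p.
Proof.
  unfold Lop, lapSigma, xgradSigma.
  rewrite rsum_lin.
  rewrite (rsum_ext (S n) (fun i => rsum (S n) (fun j => nu n p i * nu n p j * (D2 i j p - s * E2 i j p)))
     (fun i => rsum (S n) (fun j => nu n p i * nu n p j * D2 i j p) - s * rsum (S n) (fun j => nu n p i * nu n p j * E2 i j p))).
  2:{ intros i _. rewrite <- rsum_lin. apply rsum_ext; intros; ring. }
  rewrite rsum_lin.
  rewrite (rsum_ext (S n) (fun i => nu n p i * (D1 i p - s * E1 i p))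
     (fun i => nu n p i * D1 i p - s * (nu n p i * E1 i p))) by (intros; ring).
  rewrite (rsum_ext (S n) (fun i => p i * (D1 i p - s * E1 i p))
     (fun i => p i * D1 i p - s * (p i * E1 i p))) by (intros; ring).
  rewrite !rsum_lin. ring.
Qed.

Lemma der_lin f g x l1 l2 s : derivable_pt_lim f x l1 -> derivable_pt_lim g x l2 ->
  derivable_pt_lim (fun t => f t - s * g t) x (l1 - s * l2).
Proof. intros H1 H2. exact (derivable_pt_lim_minus f (mult_real_fct s g) x _ _ H1 (derivable_pt_lim_scal g s x l2 H2)). Qed.

Lemma contat_lin N f g s x : contat N f x -> contat N g x -> contat N (fun y => f y - s * g y) x.
Proof. intros; apply contat_minus; auto. apply contat_mult; auto; apply contat_const. Qed.

Lemma C2_lin N W U D1 D2 G E1 E2 s : C2_on N W U D1 D2 -> C2_on N W G E1 E2 ->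
  C2_on N W (fun x => U x - s * G x) (fun i x => D1 i x - s * E1 i x)
    (fun i j x => D2 i j x - s * E2 i j x).
Proof.
  intros [a1 [a2 [a3 [a4 a5]]]] [b1 [b2 [b3 [b4 b5]]]].
  repeat split.
  - intros x Wx; apply contat_lin; [exact (a1 x Wx)| exact (b1 x Wx)].
  - intros i Hi x Wx; apply contat_lin; [exact (a2 i Hi x Wx)| exact (b2 i Hi x Wx)].
  - intros i j Hi Hj x Wx; apply contat_lin; [exact (a3 i j Hi Hj x Wx)| exact (b3 i j Hi Hj x Wx)].
  - intros x i Wx Hi. apply (der_lin (fun t => U (upd x i t)) (fun t => G (upd x i t))); auto.
  - intros x i j Wx Hi Hj. apply (der_lin (fun t => D1 j (upd x i t)) (fun t => E1 j (upd x i t))); auto.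
Qed.
Lemma nonexist n Omega al be g g1 g2 :
  (2 <= n)%nat -> stable n Omega ->
  (forall z, derivable_pt_lim g z (g1 z)) -> (forall z, derivable_pt_lim g1 z (g2 z)) ->
  (forall z, continuity_pt g2 z) ->
  (forall x, Sigma n x -> al <= x n <= be -> Omega x) ->
  (exists z0, al <= z0 <= be /\ 0 < g z0) ->
  (forall z, al <= z <= be -> 0 < g z -> al < z < be /\ 0 < g2 z - z / 2 * g1 z + g z) ->
  False.
Proof.
  intros Hn [W [U [D1 [D2 [HW [HOW [HC HL]]]]]]] Hg1 Hg2 Hg2c HK [z0 [Hz0 Hgz0]] Hint.
  assert (Hgc : forall z, continuity_pt g z) by (intro z; exact (derivable_continuous_pt g z (exist _ (g1 z) (Hg1 z)))).
  set (K := fun x => Sigma n x /\ al <= x n <= be).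
  set (phi := fun x => g (x n) / U x).
  set (r2 := 2 * (INR n - 1)).
  assert (H2n : 2 <= INR n) by (replace 2 with (INR 2) by (simpl; ring); apply le_INR; auto).
  assert (Hr2 : 0 < r2) by (unfold r2; lra).
  assert (HKO : forall x, K x -> W x /\ 0 < U x /\ Lop n U D1 D2 x = 0).
  { intros x [Sx Bx]. assert (Ox := HK x Sx Bx). split; [apply HOW; auto|].
    destruct (HL x Ox); split; auto. }
  set (x0 := upd (upd (fun _ => 0) 0 (rad n)) n z0).
  assert (Kx0 : K x0).
  { split.
    - unfold Sigma, x0. rewrite rsum_sq_upd_out by lia. rewrite rsum_sq_upd by lia.
      rewrite rsum_zero by (intros; simpl; ring).
      replace (rad n ^ 2) with (rad n * rad n) by ring. rewrite rad_sq by auto. ring.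
    - unfold x0; rewrite upd_same; auto. }
  destruct (max_exists (S n) K phi (r2 + 1 + Rabs al + Rabs be)) as [p [Kp Hmax]].
  - intros x nKx. destruct (classic (Sigma n x)) as [Sx|nSx].
    + assert (Hb : ~ (al <= x n <= be)) by (intros Hb; apply nKx; split; auto).
      destruct (Rlt_or_le (x n) al) as [Hlt|Hge].
      * exists (al - x n); split; [lra|]. intros y Hy [_ Hy2].
        specialize (Hy n (Nat.lt_succ_diag_r n)). apply Rabs_def2 in Hy. lra.
      * assert (Hgt : be < x n) by (destruct (Rle_dec (x n) be); [exfalso; apply Hb; split; auto| lra]).
        exists (x n - be); split; [lra|]. intros y Hy [_ Hy2].
        specialize (Hy n (Nat.lt_succ_diag_r n)). apply Rabs_def2 in Hy. lra.
    + assert (Hne : rsum n (fun i => x i ^ 2) <> r2) by auto.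
      destruct (contat_rsum_sq (S n) n x (Nat.le_succ_diag_r n) (Rabs (rsum n (fun i => x i ^ 2) - r2)))
        as [d [Hd Hd']].
      { apply Rabs_pos_lt. lra. }
      exists d; split; auto. intros y Hy [Sy _]. specialize (Hd' y Hy).
      unfold Sigma in Sy. rewrite Sy in Hd'. fold r2 in Hd'. rewrite Rabs_minus_sym in Hd'. lra.
  - intros x [Sx Bx] i Hi. destruct (Nat.eq_dec i n) as [->|Hne].
    + assert (Rabs (x n) <= Rabs al + Rabs be).
      { destruct (Rle_dec 0 (x n)).
        - rewrite Rabs_pos_eq by auto. pose proof (Rle_abs be). pose proof (Rabs_pos al). lra.
        - rewrite Rabs_left by lra. pose proof (Rabs_pos be). pose proof (Rabs_pos al).
          pose proof (Rle_abs (- al)). rewrite Rabs_Ropp in *. lra. }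
      lra.
    + assert (Hsq : x i ^ 2 <= r2) by (unfold Sigma in Sx; unfold r2; rewrite <- Sx; apply sq_le_rsum; lia).
      assert (Rabs (x i) <= r2 + 1).
      { destruct (Rle_dec 0 (x i)).
        - rewrite Rabs_pos_eq by auto. nra.
        - rewrite Rabs_left by lra. nra. }
      pose proof (Rabs_pos al). pose proof (Rabs_pos be). lra.
  - intros x Kx. destruct (HKO x Kx) as [Wx [Ux _]].
    apply contat_div.
    + apply contat_zfun; auto.
    + destruct HC as [HC0 _]. exact (HC0 x Wx).
    + lra.
  - exists x0; auto.
  - set (M := phi p).
    destruct (HKO p Kp) as [Wp [Up LUp]].
    destruct (HKO x0 Kx0) as [_ [Ux0 _]].
    assert (HM : 0 < M).
    { assert (phi x0 <= M) by (apply Hmax; auto).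
      assert (0 < phi x0) by (unfold phi, x0 at 1; rewrite upd_same; apply Rdiv_lt_0_compat; auto).
      lra. }
    assert (HgpM : g (p n) = M * U p) by (unfold M, phi; field; lra).
    destruct Kp as [Sp Bp].
    destruct (Hint (p n) Bp) as [[Hpa Hpb] HLg]; [rewrite HgpM; apply Rmult_lt_0_compat; auto|].
    set (s := / M).
    destruct (HW p Wp) as [dW [HdW HdW']].
    set (del := Rmin dW (Rmin (p n - al) (be - p n))).
    assert (Hdel : 0 < del) by (apply Rmin_pos; auto; apply Rmin_pos; lra).
    assert (Hmin := min_lemma n W (fun x => U x - s * Uz n g x) (fun i x => D1 i x - s * D1z n g1 i x)
       (fun i j x => D2 i j x - s * D2z n g2 i j x) p del Hn HW
       (C2_lin (S n) W U D1 D2 _ _ _ s HC (zfun_C2 n W g g1 g2 Hg1 Hg2 Hg2c)) Wp Sp).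
    rewrite Lop_lin, LUp, zfun_Lop in Hmin by auto.
    assert (0 < s) by (unfold s; apply Rinv_0_lt_compat; auto).
    assert (0 < s * (g2 (p n) - p n / 2 * g1 (p n) + g (p n))) by (apply Rmult_lt_0_compat; auto).
    enough (0 <= 0 - s * (g2 (p n) - p n / 2 * g1 (p n) + g (p n))) by lra.
    apply Hmin; auto.
    + unfold Uz, s. rewrite HgpM. field. lra.
    + intros q Sq Hq.
      assert (Wq : W q) by (apply HdW'; eapply near_mono; [|exact Hq]; apply Rmin_l).
      assert (Hqn : Rabs (q n - p n) < del) by (apply Hq; lia).
      assert (Hdel2 : del <= Rmin (p n - al) (be - p n)) by apply Rmin_r.
      pose proof (Rmin_l (p n - al) (be - p n)). pose proof (Rmin_r (p n - al) (be - p n)).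
      apply Rabs_def2 in Hqn.
      assert (Kq : K q) by (split; auto; lra).
      destruct (HKO q Kq) as [_ [Uq _]].
      split; auto.
      assert (Hpq : phi q <= M) by (apply Hmax; auto).
      unfold phi in Hpq. unfold Uz, s.
      assert (g (q n) <= M * U q).
      { apply (Rmult_le_compat_r (U q)) in Hpq; [|lra]. unfold Rdiv in Hpq.
        rewrite Rmult_assoc, Rinv_l in Hpq by lra. lra. }
      assert (Hm2 : / M * g (q n) <= / M * (M * U q)) by (apply Rmult_le_compat_l; [left; apply Rinv_0_lt_compat; auto| auto]).
      replace (/ M * (M * U q)) with (U q) in Hm2 by (field; lra). lra.
Qed.
Lemma stable_zfun n (Omega : pt -> Prop) g g1 g2 : (2 <= n)%nat ->
  (forall z, derivable_pt_lim g z (g1 z)) -> (forall z, derivable_pt_lim g1 z (g2 z)) ->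
  (forall z, continuity_pt g2 z) ->
  (forall x, Omega x -> 0 < g (x n)) ->
  (forall z, g2 z - z / 2 * g1 z + g z = 0) -> stable n Omega.
Proof.
  intros Hn H1 H2 H3 Hpos HL.
  exists (fun _ => True), (Uz n g), (D1z n g1), (D2z n g2).
  split; [intros x _; exists 1; split; [lra| auto]|].
  split; [auto|]. split; [apply zfun_C2; auto|].
  intros x Ox. rewrite zfun_Lop by auto. split; [apply HL| apply Hpos; auto].
Qed.

Lemma der_poly_sq z : derivable_pt_lim (fun z => z * z) z (2 * z).
Proof. apply is_derive_Reals. auto_derive; auto. ring. Qed.

Lemma cont_const c z : continuity_pt (fun _ => c) z.
Proof. apply continuity_pt_const. intros a b; reflexivity. Qed.

Lemma sqrt2_facts : 0 < sqrt 2 /\ sqrt 2 * sqrt 2 = 2.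
Proof. split; [apply sqrt_lt_R0; lra| apply sqrt_sqrt; lra]. Qed.

Theorem corollary4p10 (n : nat) (hn : (2 <= n)%nat) :
  forall C : R, 0 < C ->
    ((stable n (region_up n C) /\ stable n (region_mid n C) /\
      stable n (region_low n C)) <-> C = sqrt 2).
Proof.
  intros C HC. destruct sqrt2_facts as [Hs0 Hs2]. split.
  - intros [Hup [Hmid _]].
    destruct (Rtotal_order C (sqrt 2)) as [Hlt|[Heq|Hgt]]; auto; exfalso.
    + set (b := (C + sqrt 2) / 2).
      assert (Hb0 : C < b) by (unfold b; lra). assert (Hb1 : b < sqrt 2) by (unfold b; lra).
      assert (Hbb : b * b < 2) by nra.
      set (R0 := 36 / (2 - b * b) + 1).
      assert (HR1 : 36 / (2 - b * b) >= 18).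
      { apply Rle_ge. apply (Rmult_le_reg_r (2 - b * b)); [lra|].
        unfold Rdiv. rewrite Rmult_assoc, Rinv_l by lra. nra. }
      assert (HR2 : 36 < R0 * R0 * (2 - b * b)).
      { unfold R0. set (X := 36 / (2 - b * b)) in *.
        assert (H36 : X * (2 - b * b) = 36) by (unfold X; field; lra).
        replace ((X + 1) * (X + 1) * (2 - b * b)) with (X * (X * (2 - b * b)) + 2 * (X * (2 - b * b)) + (2 - b * b)) by ring.
        rewrite H36. clear -HR1 Hbb. lra. }
      assert (HbR : b < R0) by (unfold R0; nra).
      apply (nonexist n (region_up n C) b R0
        (fun z => (z * z - b * b) * (R0 * R0 - z * z))
        (fun z => 2 * z * (R0 * R0 + b * b) - 4 * (z * z * z))
        (fun z => 2 * (R0 * R0 + b * b) - 12 * (z * z))); auto.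
      * intro z. apply is_derive_Reals. auto_derive; auto. ring.
      * intro z. apply is_derive_Reals. auto_derive; auto. ring.
      * intro z. apply derivable_continuous_pt. apply derivable_pt_minus.
        apply derivable_pt_const. apply derivable_pt_scal. apply derivable_pt_mult; apply derivable_pt_id.
      * intros x Sx [H1 H2]. split; auto. lra.
      * exists ((b + R0) / 2). split; [lra|]. apply Rmult_lt_0_compat; nra.
      * intros z [H1 H2] Hg. split.
        -- split.
           ++ destruct (Req_dec z b) as [->|Hne]; [|lra]. exfalso. replace (b * b - b * b) with 0 in Hg by ring. lra.
           ++ destruct (Req_dec z R0) as [->|Hne]; [|lra]. exfalso. replace (R0 * R0 - R0 * R0) with 0 in Hg by ring. lra.
        -- assert (Hpoly : 2 * (R0 * R0 + b * b) - 12 * (z * z) - z / 2 * (2 * z * (R0 * R0 + b * b) - 4 * (z * z * z)) +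
              (z * z - b * b) * (R0 * R0 - z * z) = (z * z - 6) * (z * z - 6) + (R0 * R0 * (2 - b * b) - 36) + 2 * (b * b))
             by field.
           rewrite Hpoly. pose proof (Rle_0_sqr (z * z - 6)). pose proof (Rle_0_sqr b). unfold Rsqr in *. lra.
    + set (a := (C + sqrt 2) / 2).
      assert (Ha0 : a < C) by (unfold a; lra). assert (Ha1 : sqrt 2 < a) by (unfold a; lra).
      assert (Haa : 2 < a * a) by nra.
      apply (nonexist n (region_mid n C) (- a) a
        (fun z => a * a - z * z) (fun z => - (2 * z)) (fun _ => -2)); auto.
      * intro z. apply is_derive_Reals. auto_derive; auto. ring.
      * intro z. apply is_derive_Reals. auto_derive; auto. ring.
      * intro z. apply cont_const.
      * intros x Sx [H1 H2]. split; auto. apply Rabs_def1; lra.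
      * exists 0. split; lra.
      * intros z [H1 H2] Hg. split.
        -- split; nra.
        -- replace (-2 - z / 2 * - (2 * z) + (a * a - z * z)) with (a * a - 2) by field. lra.
  - intros ->. split; [|split].
    + apply (stable_zfun n _ (fun z => z * z - 2) (fun z => 2 * z) (fun _ => 2)); auto.
      * intro z. apply is_derive_Reals. auto_derive; auto. ring.
      * intro z. apply is_derive_Reals. auto_derive; auto. ring.
      * intro z; apply cont_const.
      * intros x [_ Hx]. nra.
      * intro z; field.
    + apply (stable_zfun n _ (fun z => 2 - z * z) (fun z => - (2 * z)) (fun _ => -2)); auto.
      * intro z. apply is_derive_Reals. auto_derive; auto. ring.
      * intro z. apply is_derive_Reals. auto_derive; auto. ring.
      * intro z; apply cont_const.
      * intros x [_ Hx]. apply Rabs_def2 in Hx. nra.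
      * intro z; field.
    + apply (stable_zfun n _ (fun z => z * z - 2) (fun z => 2 * z) (fun _ => 2)); auto.
      * intro z. apply is_derive_Reals. auto_derive; auto. ring.
      * intro z. apply is_derive_Reals. auto_derive; auto. ring.
      * intro z; apply cont_const.
      * intros x [_ Hx]. nra.
      * intro z; field.
Qed.
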